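(* Let $\Gamma$ and $G$ be topological groups, $A$ a tree, and $\mathcal I$ a cellular $(\Gamma,A)$-groupoid. Then the map $\kappa\colon\mathrm{Rep}^G_{\mathrm{cell}}(\mathcal I)\to\overline{\mathrm{Rep}}^{\,G}_{\mathrm{cell}}(\mathcal I)$ is surjective.
   Context: A tree is a contractible graph (1-dimensional CW-complex). A $(\Gamma,A)$-groupoid: subspace $\mathcal I\subset\Gamma\times A$ with $\mathcal I\cap(\Gamma\times\{a\})=\tilde{\mathcal I}_a\times\{a\}$, $\tilde{\mathcal I}_a$ closed subgroups (identified with $\mathcal I_a$). $e(a)$: cell whose open cell contains $a$. Cellular: $\mathcal I_a=\mathcal I_b$ when $e(a)=e(b)$ (written $\mathcal I(e)$), and locally maximal (each $a$ and neighbourhood $B$ admit open $U$, $a\in U\subset B$, homotopy $\rho_t\colon U\to U$, $\rho_0=\mathrm{id}$, $\rho_1\equiv a$, $\mathcal I_u\subset\mathcal I_{\rho_t(u)}$); thus $\mathcal I(e)\subset\mathcal I(v)$ for a vertex $v$ of an edge $e$. A cellular representation is a continuous $\beta\colon\mathcal I\to G$, homomorphism on each $\mathcal I_a$, with $\beta_a=\beta_b$ when $e(a)=e(b)$; $\mathrm{Rep}^G_{\mathrm{cell}}(\mathcal I)$ is the set of these modulo conjugation by a constant $g\in G$. $\overline{\mathrm{Rep}}^{\,G}_{\mathrm{cell}}(\mathcal I)$: families $(b_e)$ over cells with $b_e$ a $G$-conjugacy class of continuous homomorphisms $\mathcal I(e)\to G$ and $b_e=b_v|_{\mathcal I(e)}$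 for each vertex $v$ of each edge $e$. $\kappa$ sends $\beta$ to $([\beta_e])_e$. *)

(* Defs.v *)
From HB Require Import structures.
From mathcomp Require Import all_boot all_order all_algebra.
From mathcomp Require Import all_classical all_reals all_analysis.
Set Implicit Arguments. Unset Strict Implicit. Unset Printing Implicit Defensive.
Local Open Scope classical_set_scope.

Record topGroup := TopGroup {
  tg_car :> topologicalType;
  tg_mul : tg_car -> tg_car -> tg_car;
  tg_inv : tg_car -> tg_car;
  tg_one : tg_car;
  tg_mulA : forall x y z, tg_mul x (tg_mul y z) = tg_mul (tg_mul x y) z;
  tg_mul1g : forall x, tg_mul tg_one x = x;
  tg_mulg1 : forall x, tg_mul x tg_one = x;
  tg_mulVg : forall x, tg_mul (tg_inv x) x = tg_one;
  tg_mulgV : forall x, tg_mul x (tg_inv x) = tg_one;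
  tg_mul_cont : continuous (fun p : tg_car * tg_car => tg_mul p.1 p.2);
  tg_inv_cont : continuous tg_inv }.

Section TopGroupDefs.
Variables (Gam G : topGroup).

Definition closed_subgroup (H : set Gam) : Prop :=
  [/\ H (tg_one Gam),
      (forall x y, H x -> H y -> H (tg_mul x y)),
      (forall x, H x -> H (tg_inv x)) & closed H].

(** [f] restricted to the subgroup [H] is a continuous homomorphism [H -> G]
    (only the values of [f] on [H] matter; [H] carries the subspace topology) *)
Definition cont_hom_on (H : set Gam) (f : Gam -> G) : Prop :=
  {within H, continuous f} /\
  (forall x y, H x -> H y -> f (tg_mul x y) = tg_mul (f x) (f y)).

Definition conj_on (H : set Gam) (f1 f2 : Gam -> G) : Prop :=
  exists g : G, forall x, H x -> f1 x = tg_mul (tg_mul g (f2 x)) (tg_inv g).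

End TopGroupDefs.

(** A graph (1-dimensional CW complex) is given by its set of vertices [V]
    (0-cells), its set of edges [E] (1-cells) and the two endpoints
    [src e], [tgt e] of each edge (attaching map). *)
Section Graphs.
Variables (V E : Type) (src tgt : E -> V).

Definition ostart (s : E * bool) : V := if s.2 then src s.1 else tgt s.1.
Definition oend (s : E * bool) : V := if s.2 then tgt s.1 else src s.1.

Fixpoint is_walk (u v : V) (s : list (E * bool)) : Prop :=
  match s with
  | nil => u = v
  | st :: s' => ostart st = u /\ is_walk (oend st) v s'
  end.

Fixpoint reduced (s : list (E * bool)) : Prop :=
  match s with
  | st1 :: ((st2 :: _) as s') =>
      ~ (st1.1 = st2.1 /\ st1.2 = ~~ st2.2) /\ reduced s'
  | _ => True
  end.

(** A tree = contractible graph, i.e. a connected graph without cycles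
    (no nontrivial reduced closed edge path; this also excludes loops and
    multiple edges). *)
Definition is_tree : Prop :=
  (forall u v : V, exists s, is_walk u v s) /\
  (forall (v : V) s, is_walk v v s -> reduced s -> s = nil).

End Graphs.

Section Groupoids.
Variables (Gam G : topGroup) (V E : Type) (src tgt : E -> V).

(** A cellular (Gam, A)-groupoid over the tree A, described cellwise:
    the closed subgroup I(v) at each vertex, I(e) at each edge, with
    I(e) contained in I(v) for both vertices v of e (local maximality). *)
Definition cellular_groupoid (Iv : V -> set Gam) (Ie : E -> set Gam) : Prop :=
  [/\ (forall v, closed_subgroup (Iv v)),
      (forall e, closed_subgroup (Ie e)),
      (forall e, Ie e `<=` Iv (src e)) &
      (forall e, Ie e `<=` Iv (tgt e))].

(** A cellular representation beta : I -> G, given cellwise by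
    beta_v : I(v) -> G and beta_e : I(e) -> G (continuous homomorphisms),
    which glue continuously: beta_e is the restriction of beta_v for each
    vertex v of e. *)
Definition cellular_rep (Iv : V -> set Gam) (Ie : E -> set Gam)
    (bv : V -> Gam -> G) (be : E -> Gam -> G) : Prop :=
  [/\ (forall v, cont_hom_on (Iv v) (bv v)),
      (forall e, cont_hom_on (Ie e) (be e)),
      (forall e x, Ie e x -> be e x = bv (src e) x) &
      (forall e x, Ie e x -> be e x = bv (tgt e) x)].

(** An element of bar-Rep^G_cell(I), given by representatives
    fv v, fe e of the conjugacy classes b_v, b_e: each a continuous hom,
    and b_e = b_v|_{I(e)} for each vertex v of each edge e. *)
Definition rep_bar_cell (Iv : V -> set Gam) (Ie : E -> set Gam)
    (fv : V -> Gam -> G) (fe : E -> Gam -> G) : Prop :=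
  [/\ (forall v, cont_hom_on (Iv v) (fv v)),
      (forall e, cont_hom_on (Ie e) (fe e)),
      (forall e, conj_on (Ie e) (fe e) (fv (src e))) &
      (forall e, conj_on (Ie e) (fe e) (fv (tgt e)))].

End Groupoids.

(* Main.v *)
Require Import Defs.
From mathcomp Require Import all_boot all_order all_algebra.
From mathcomp Require Import all_classical all_reals all_analysis.
From mathcomp Require Import zify.
Local Open Scope classical_set_scope.
Lemma conj_cont (G : topGroup) (g : G) : continuous (fun y : G => tg_mul (tg_mul g y) (tg_inv g)).
Proof.
move=> y.
have h1 : continuous (fun y : G => tg_mul g y).
  move=> z; apply: (@continuous_comp _ _ _ (fun y : G => (g, y)) (fun p : G * G => tg_mul p.1 p.2)).
    by apply: cvg_pair; [exact: cvg_cst | exact: cvg_id].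
  exact: tg_mul_cont.
apply: (@continuous_comp _ _ _ (fun y : G => (tg_mul g y, tg_inv g)) (fun p : G * G => tg_mul p.1 p.2)).
  by apply: cvg_pair; [exact: h1 | exact: cvg_cst].
exact: tg_mul_cont.
Qed.
Lemma within_comp (T U W : topologicalType) (A : set T) (f : T -> U) (c : U -> W) :
  {within A, continuous f} -> continuous c -> {within A, continuous (c \o f)}.
Proof. move=> hf hc x; exact: (@continuous_comp (subspace A) U W f c x (hf x) (hc (f x))). Qed.

Section Grp.
Variable G : topGroup.
Local Notation m := (@tg_mul G).
Local Notation inv := (@tg_inv G).
Local Notation one := (@tg_one G).
Definition cj (g y : G) : G := m (m g y) (inv g).

Lemma inv_uniq (x y : G) : m x y = one -> x = inv y.
Proof. move=> h. by rewrite -(tg_mulg1 x) -(tg_mulgV y) tg_mulA h tg_mul1g. Qed.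
Lemma invK (x : G) : inv (inv x) = x.
Proof. by symmetry; apply: inv_uniq; rewrite tg_mulgV. Qed.
Lemma inv1 : inv one = one.
Proof. by symmetry; apply: inv_uniq; rewrite tg_mul1g. Qed.
Lemma invM (a b : G) : inv (m a b) = m (inv b) (inv a).
Proof.
symmetry; apply: inv_uniq.
by rewrite -tg_mulA (tg_mulA (inv a)) tg_mulVg tg_mul1g tg_mulVg.
Qed.
Lemma cjM g x y : cj g (m x y) = m (cj g x) (cj g y).
Proof.
rewrite /cj -!tg_mulA; congr (m g _).
by rewrite (tg_mulA (inv g) g) tg_mulVg tg_mul1g !tg_mulA.
Qed.
Lemma cjC a b y : cj a (cj b y) = cj (m a b) y.
Proof. by rewrite /cj invM !tg_mulA. Qed.
Lemma cj1 y : cj one y = y.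
Proof. by rewrite /cj inv1 tg_mul1g tg_mulg1. Qed.
Lemma cj_inv a y z : y = cj a z -> z = cj (inv a) y.
Proof. by move=> ->; rewrite cjC tg_mulVg cj1. Qed.
End Grp.
Arguments cj {G}.
Arguments cj_inv {G a y z}.

Section Tree.
Variables (G : topGroup) (V E : Type) (src tgt : E -> V) (k : E -> G).
Local Notation m := (@tg_mul G).
Local Notation inv := (@tg_inv G).
Local Notation one := (@tg_one G).

Definition step (p : E * bool) : G := if p.2 then k p.1 else inv (k p.1).
Definition prodw (s : list (E * bool)) : G := foldr (fun p acc => m (step p) acc) one s.
Definition flip (p : E * bool) : E * bool := (p.1, ~~ p.2).
Definition rw (s : list (E * bool)) := rev (map flip s).

Lemma prod_cat s1 s2 : prodw (s1 ++ s2) = m (prodw s1) (prodw s2).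
Proof. elim: s1 => [|a t IH] /=; first by rewrite tg_mul1g. by rewrite IH tg_mulA. Qed.

Lemma walk_cat u w s1 s2 : is_walk src tgt u w (s1 ++ s2) <->
  exists x, is_walk src tgt u x s1 /\ is_walk src tgt x w s2.
Proof.
elim: s1 u => [|a t IH] u /=.
  by split; [move=> h; exists u | move=> [x [-> h]]].
split.
  by move=> [h1 /IH [x [h2 h3]]]; exists x.
by move=> [x [[h1 h2] h3]]; split=> //; apply/IH; exists x.
Qed.

Lemma walk_rw u w s : is_walk src tgt u w s -> is_walk src tgt w u (rw s).
Proof.
elim: s u => [|a t IH] u /=; first by move=> ->.
move=> [h1 h2]; rewrite /rw /= rev_cons -cats1; apply/walk_cat.
exists (oend src tgt a); split; first exact: IH.
by move: h1; clear h2; case: a => e [] /= <-.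
Qed.

Lemma prod_rw s : prodw (rw s) = inv (prodw s).
Proof.
elim: s => [|a t IH]; first by rewrite /= inv1.
rewrite /rw /= rev_cons -cats1 prod_cat -/(rw t) IH /= tg_mulg1 invM.
by case: a => e [] //=; rewrite /step /= invK.
Qed.

Lemma nonreduced (s : list (E * bool)) : ~ reduced s -> exists s1 (p q : E * bool) s2,
  s = s1 ++ p :: q :: s2 /\ p.1 = q.1 /\ p.2 = ~~ q.2.
Proof.
elim: s => [|a t IH] //=.
case: t IH => [|b t'] IH //=.
move=> h; case: (boolp.EM (a.1 = b.1 /\ a.2 = ~~ b.2)) => hab.
  by exists nil, a, b, t'.
have /IH [s1 [p [q [s2 [-> hpq]]]]] : ~ reduced (b :: t').
  by move=> hr; apply: h; split.
by exists (a :: s1), p, q, s2.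
Qed.

Hypothesis tree : is_tree src tgt.

Lemma closed_prod n : forall s v, (size s <= n)%N -> is_walk src tgt v v s -> prodw s = one.
Proof.
elim: n => [|n IH] s v hs hw.
  by case: s hs hw.
case: (boolp.EM (reduced s)) => hr.
  by rewrite (tree.2 v s hw hr).
have [s1 [p [q [s2 [hs' [h1 h2]]]]]] := @nonreduced s hr.
subst s; clear hr; have hs2 : (size (s1 ++ s2) <= n)%N by move: hs; rewrite !size_cat /=; lia. clear hs.
have hw' : is_walk src tgt v v (s1 ++ s2).
  move/walk_cat: hw => [x [hw1 /= [hp [hq hw2]]]].
  apply/walk_cat; exists x; split => //.
  suff <- : oend src tgt q = x by [].
  by rewrite -hp; case: p q h1 h2 {hq hw2 hp} => e b [e' b'] /= -> ->; case: b'.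
have h := IH _ _ hs2 hw'. rewrite prod_cat in h.
rewrite prod_cat /=.
  suff -> : m (step p) (m (step q) (prodw s2)) = prodw s2 by [].
  rewrite tg_mulA; case: p q h1 h2 {hw hw'} => e b [e' b'] /= -> ->.
  by rewrite /step /=; case: b' => /=; rewrite ?tg_mulVg ?tg_mulgV tg_mul1g.
Qed.

Lemma potential : exists g : V -> G, forall e, g (tgt e) = m (g (src e)) (k e).
Proof.
case: (boolp.EM (exists v : V, True)) => [[v0 _]|hV]; last first.
  by exists (fun _ => one) => e; exfalso; apply: hV; exists (src e).
have [w hw] := choice (fun v => tree.1 v0 v).
exists (fun v => prodw (w v)) => e.
have hc : is_walk src tgt v0 v0 (w (src e) ++ (e, true) :: rw (w (tgt e))).
  apply/walk_cat; exists (src e); split; first exact: hw.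
  by split => //=; apply: walk_rw; apply: hw.
have := @closed_prod _ _ _ (leqnn _) hc.
rewrite prod_cat /= prod_rw tg_mulA => /inv_uniq.
by rewrite invK => <-.
Qed.
End Tree.

Theorem lemma5p14 (Gam G : topGroup) (V E : Type) (src tgt : E -> V)
    (tree_A : is_tree src tgt)
    (Iv : V -> set Gam) (Ie : E -> set Gam)
    (cellI : cellular_groupoid src tgt Iv Ie)
    (fv : V -> Gam -> G) (fe : E -> Gam -> G)
    (hb : rep_bar_cell src tgt Iv Ie fv fe) :
  exists (bv : V -> Gam -> G) (be : E -> Gam -> G),
    cellular_rep src tgt Iv Ie bv be /\
    (forall v, conj_on (Iv v) (bv v) (fv v)) /\
    (forall e, conj_on (Ie e) (be e) (fe e)).
Proof.
case: hb => hfv hfe hs ht.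
case: cellI => _ _ ss st.
have [HS HSP] := choice hs.
have [HT HTP] := choice ht.
pose k e := tg_mul (tg_inv (HS e)) (HT e).
have [g hg] := @potential G V E src tgt k tree_A.
pose bv v x := cj (g v) (fv v x).
have hbv : forall v, cont_hom_on (Iv v) (bv v).
  move=> v; split.
    have H := (@within_comp Gam G G (Iv v) (fv v) (cj (g v)) (hfv v).1 (@conj_cont G (g v))).
    exact H.
  by move=> x y hx hy; rewrite /bv (hfv v).2 // cjM.
have key_s : forall e x, Ie e x -> bv (src e) x = cj (tg_mul (g (src e)) (tg_inv (HS e))) (fe e x).
  move=> e x hx; rewrite /bv (cj_inv (HSP e x hx)) cjC //.
exists bv, (fun e => bv (src e)); split; [split|split].
- exact: hbv.
- move=> e; split.
    exact: (continuous_subspaceW (ss e) (hbv (src e)).1).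
  by move=> x y hx hy; apply: (hbv (src e)).2; apply: ss.
- by [].
- move=> e x hx; rewrite key_s // /bv (cj_inv (HTP e x hx)) cjC hg /k.
  by rewrite -!tg_mulA tg_mulgV tg_mulg1.
- by move=> v; exists (g v).
- by move=> e; exists (tg_mul (g (src e)) (tg_inv (HS e))) => x hx; rewrite key_s.
Qed.
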